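(* Let $k\ge1$, let $M=\Gamma(\mathbb Z\,\overrightarrow{\times}\,G,(k,0))$ with $G$ a Dedekind $\sigma$-complete $\ell$-group, and let $F:\mathbb R^2\to M$ be a two-dimensional spectral resolution. Then every non-empty $T_i$, $i\in\{1,\ldots,k\}$, has at most $k$ characteristic points, and $F$ has at most $k^2$ characteristic points.
   Context: $\mathbb Z\,\overrightarrow{\times}\,G$ is $\mathbb Z\times G$ with lexicographic order; $\Gamma(K,v)=([0,v];\oplus,',0,v)$ with $a\oplus b=(a+b)\wedge v$. A two-dimensional spectral resolution is $F:\mathbb R^2\to M$ such that: (i) $F$ is monotone; (ii) $\bigvee_{(s,t)}F(s,t)=1$; (iii) $F(s,t)=\bigvee_{(s',t')\ll(s,t)}F(s',t')$; (iv) $\bigwedge_sF(s,t)=0=\bigwedge_tF(s,t)$; (v) $0\le F(b_1,b_2)-F(a_1,b_2)-F(b_1,a_2)+F(a_1,a_2)\le1$ for $a_1\le b_1$, $a_2\le b_2$ (in the group). $M_j=\{(j,g)\in M\}$, $T_j=\{(s,t)\colon F(s,t)\in M_j\}$. For $i\ge1$ and $(s,t)\in T_i$, $\pi_i(s,t)=(\inf\{r\colon(r,t)\in T_i\},\inf\{r\colon(s,r)\in T_i\})$; characteristic points of $T_i$ are the $\pi_i(s,t)$, $(s,t)\in T_i$; characteristic points of $F$ are those of the $T_i$, $i\ge1$. *)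

(* Defs.v *)
From mathcomp Require Import all_boot all_algebra.
From Stdlib Require Import Reals ZArith.

Set Implicit Arguments.
Unset Strict Implicit.
Unset Printing Implicit Defensive.

Definition is_sup_in {T : Type} (le : T -> T -> Prop) (A : T -> Prop) (x : T) : Prop :=
  (forall y, A y -> le y x) /\ (forall z, (forall y, A y -> le y z) -> le x z).

Definition is_lgroup (G : zmodType) (le : G -> G -> Prop) : Prop :=
  [/\ (forall x, le x x),
      (forall x y, le x y -> le y x -> x = y),
      (forall x y z, le x y -> le y z -> le x z),
      (forall x y z, le x y -> le (GRing.add x z) (GRing.add y z)) &
      (forall x y : G, exists j, is_sup_in le (fun w => w = x \/ w = y) j)].

Definition dedekind_sigma_complete (G : zmodType) (le : G -> G -> Prop) : Prop :=
  forall f : nat -> G, (exists u, forall n, le (f n) u) ->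
    exists s, is_sup_in le (fun w => exists n, w = f n) s.

Definition lex_le (G : zmodType) (le : G -> G -> Prop) (x y : Z * G) : Prop :=
  (x.1 < y.1)%Z \/ (x.1 = y.1 /\ le x.2 y.2).

Definition lex_add (G : zmodType) (x y : Z * G) : Z * G :=
  ((x.1 + y.1)%Z, GRing.add x.2 y.2).

Definition lex_sub (G : zmodType) (x y : Z * G) : Z * G :=
  ((x.1 - y.1)%Z, GRing.add x.2 (GRing.opp y.2)).

Definition lex_zero (G : zmodType) : Z * G := (0%Z, GRing.zero).

Definition lex_unit (G : zmodType) (k : nat) : Z * G := (Z.of_nat k, GRing.zero).

Definition inM (G : zmodType) (le : G -> G -> Prop) (k : nat) (x : Z * G) : Prop :=
  lex_le le (lex_zero G) x /\ lex_le le x (lex_unit G k).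

Definition is_supM (G : zmodType) le (k : nat) (A : Z * G -> Prop) (x : Z * G) : Prop :=
  inM le k x /\ (forall y, A y -> lex_le le y x) /\
  (forall z, inM le k z -> (forall y, A y -> lex_le le y z) -> lex_le le x z).

Definition is_infM (G : zmodType) le (k : nat) (A : Z * G -> Prop) (x : Z * G) : Prop :=
  inM le k x /\ (forall y, A y -> lex_le le x y) /\
  (forall z, inM le k z -> (forall y, A y -> lex_le le z y) -> lex_le le z x).

Local Open Scope R_scope.

Definition spectral_resolution2 (G : zmodType) (le : G -> G -> Prop) (k : nat)
    (F : R -> R -> Z * G) : Prop :=
  (forall s t, inM le k (F s t)) /\
  (forall s t s' t', s <= s' -> t <= t' -> lex_le le (F s t) (F s' t')) /\
  is_supM le k (fun y => exists s t, y = F s t) (lex_unit G k) /\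
  (forall s t, is_supM le k
     (fun y => exists s' t', s' < s /\ t' < t /\ y = F s' t') (F s t)) /\
  (forall t, is_infM le k (fun y => exists s, y = F s t) (lex_zero G)) /\
  (forall s, is_infM le k (fun y => exists t, y = F s t) (lex_zero G)) /\
  (forall a1 b1 a2 b2, a1 <= b1 -> a2 <= b2 ->
     let d := lex_add (lex_sub (lex_sub (F b1 b2) (F a1 b2)) (F b1 a2)) (F a1 a2) in
     lex_le le (lex_zero G) d /\ lex_le le d (lex_unit G k)).

(* T_j = {(s,t) : F(s,t) \in M_j}, M_j = {(j,g) \in M} *)
Definition T_set (G : zmodType) (F : R -> R -> Z * G) (j : Z) (s t : R) : Prop :=
  (F s t).1 = j.

Definition is_inf_R (A : R -> Prop) (x : R) : Prop :=
  (forall y, A y -> x <= y) /\ (forall z, (forall y, A y -> z <= y) -> z <= x).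

Definition char_point (G : zmodType) (F : R -> R -> Z * G) (i : Z) (p : R * R) : Prop :=
  exists s t, T_set F i s t /\
    is_inf_R (fun r => T_set F i r t) p.1 /\
    is_inf_R (fun r => T_set F i s r) p.2.

Definition char_point_F (G : zmodType) (F : R -> R -> Z * G) (p : R * R) : Prop :=
  exists i : Z, (1 <= i)%Z /\ char_point F i p.

Definition at_most (n : nat) (A : R * R -> Prop) : Prop :=
  exists l : list (R * R), (length l <= n)%coq_nat /\ forall p, A p -> List.In p l.

(* Main.v *)
Require Import Defs.
From mathcomp Require Import all_boot all_algebra.
From Stdlib Require Import Reals ZArith.
From Stdlib Require Import List Lia Lra Classical.
Local Open Scope R_scope.

Lemma inf_gen (g : R -> Z) (i : Z) (s a : R) :
  (forall x y, x <= y -> (g x <= g y)%Z) -> g s = i ->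
  is_inf_R (fun r => g r = i) a ->
  (forall r, r <= s -> g r = i -> exists r', r' < r /\ g r' = i) ->
  a < s /\ (forall r, a < r <= s -> g r = i) /\ (g a < i)%Z.
Proof.
  intros Hm Hs [Hi1 Hi2] Hlc.
  assert (Has : a <= s) by (apply Hi1; exact Hs).
  assert (Hga : (g a < i)%Z).
  { assert (H1 := Hm _ _ Has). destruct (Z.eq_dec (g a) i) as [E|E]; [|lia].
    destruct (Hlc a Has E) as [r' [Hr' Hgr']]. assert (H2 := Hi1 _ Hgr'). lra. }
  split; [|split; [|exact Hga]].
  { destruct (Rle_lt_or_eq_dec _ _ Has) as [H|H]; auto. subst a. lia. }
  intros r [Har Hrs].
  destruct (classic (exists y, g y = i /\ y < r)) as [[y [Hy Hyr]]|Hn].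
  - assert (H1 := Hm _ _ (Rlt_le _ _ Hyr)). assert (H2 := Hm _ _ Hrs). lia.
  - exfalso. assert (r <= a); [|lra]. apply Hi2. intros y Hy.
    apply Rnot_lt_le. intro Hyr. apply Hn. exists y; auto.
Qed.

Section Abs.
Variable f : R -> R -> Z.
Variable k : nat.
Hypothesis f_ge0 : forall s t, (0 <= f s t)%Z.
Hypothesis f_lek : forall s t, (f s t <= Z.of_nat k)%Z.
Hypothesis f_mono : forall s t s' t', s <= s' -> t <= t' -> (f s t <= f s' t')%Z.
Hypothesis f_rect : forall a1 b1 a2 b2, a1 <= b1 -> a2 <= b2 ->
  (0 <= f b1 b2 - f a1 b2 - f b1 a2 + f a1 a2)%Z.
Hypothesis f_lc : forall s t, (1 <= f s t)%Z ->
  exists s' t', s' < s /\ t' < t /\ f s' t' = f s t.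

Definition cp (i : Z) (p : R * R) := exists s t, f s t = i /\
  is_inf_R (fun r => f r t = i) p.1 /\ is_inf_R (fun r => f s r = i) p.2.

Definition props i (p : R * R) s t := f s t = i /\ p.1 < s /\ p.2 < t /\
  (forall r, p.1 < r <= s -> f r t = i) /\ (f p.1 t < i)%Z /\
  (forall r, p.2 < r <= t -> f s r = i) /\ (f s p.2 < i)%Z.

Lemma cp_props i p : (1 <= i)%Z -> cp i p -> exists s t, props i p s t.
Proof.
  intros Hi [s [t [Hst [H1 H2]]]].
  destruct (inf_gen (fun r => f r t) i s p.1) as [A1 [A2 A3]]; auto.
  { intros; apply f_mono; lra. }
  { intros r Hr Hfr. destruct (f_lc r t) as [s' [t' [B1 [B2 B3]]]]; [lia|].
    exists s'; split; auto. assert (C1 := f_mono s' t' s' t (Rle_refl _) (Rlt_le _ _ B2)).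
    assert (C2 := f_mono s' t s t ltac:(lra) (Rle_refl _)). lia. }
  destruct (inf_gen (fun r => f s r) i t p.2) as [D1 [D2 D3]]; auto.
  { intros; apply f_mono; lra. }
  { intros r Hr Hfr. destruct (f_lc s r) as [s' [t' [B1 [B2 B3]]]]; [lia|].
    exists t'; split; auto. assert (C1 := f_mono s' t' s t' (Rlt_le _ _ B1) (Rle_refl _)).
    assert (C2 := f_mono s t' s t (Rle_refl _) ltac:(lra)). lia. }
  exists s, t. repeat split; auto.
Qed.

Lemma jump i p s t T r' : props i p s t -> t <= T -> p.1 < r' -> (f p.1 T < f r' T)%Z.
Proof.
  intros [P0 [P1 [P2 [P3 [P4 [P5 P6]]]]]] HT Hr.
  set r'' := Rmin r' s.
  assert (H1 : p.1 < r'') by (apply Rmin_glb_lt; lra).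
  assert (H2 : r'' <= s) by apply Rmin_r.
  assert (H3 : r'' <= r') by apply Rmin_l.
  assert (E := P3 r'' (conj H1 H2)).
  assert (R1 := f_rect p.1 r'' t T ltac:(lra) HT).
  assert (R2 := f_mono r'' T r' T H3 (Rle_refl _)). lia.
Qed.

Lemma anti1 i p q s t s' t' : props i p s t -> props i q s' t' ->
  p.1 <= q.1 -> p.2 < q.2 -> False.
Proof.
  intros [P0 [P1 [P2 [P3 [P4 [P5 P6]]]]]] [Q0 [Q1 [Q2 [Q3 [Q4 [Q5 Q6]]]]]] H1 H2.
  set r := Rmin s s'. set r' := Rmin t q.2.
  assert (A1 : p.1 < r) by (apply Rmin_glb_lt; lra).
  assert (A2 : r <= s) by apply Rmin_l. assert (A3 : r <= s') by apply Rmin_r.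
  assert (B1 : p.2 < r') by (apply Rmin_glb_lt; lra).
  assert (B2 : r' <= t) by apply Rmin_l. assert (B3 : r' <= q.2) by apply Rmin_r.
  assert (E1 := P3 r (conj A1 A2)). assert (E2 := P5 r' (conj B1 B2)).
  assert (R1 := f_rect r s r' t A2 B2).
  assert (R2 := f_mono r r' s' q.2 A3 B3). lia.
Qed.

Lemma anti2 i p q s t s' t' : props i p s t -> props i q s' t' ->
  p.2 <= q.2 -> p.1 < q.1 -> False.
Proof.
  intros [P0 [P1 [P2 [P3 [P4 [P5 P6]]]]]] [Q0 [Q1 [Q2 [Q3 [Q4 [Q5 Q6]]]]]] H1 H2.
  set r := Rmin s q.1. set r' := Rmin t t'.
  assert (A1 : p.1 < r) by (apply Rmin_glb_lt; lra).
  assert (A2 : r <= s) by apply Rmin_l. assert (A3 : r <= q.1) by apply Rmin_r.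
  assert (B1 : p.2 < r') by (apply Rmin_glb_lt; lra).
  assert (B2 : r' <= t) by apply Rmin_l. assert (B3 : r' <= t') by apply Rmin_r.
  assert (E1 := P3 r (conj A1 A2)). assert (E2 := P5 r' (conj B1 B2)).
  assert (R1 := f_rect r s r' t A2 B2).
  assert (R2 := f_mono r r' q.1 t' A3 B3). lia.
Qed.

Lemma props_eq i p q s t s' t' : props i p s t -> props i q s' t' -> p.1 = q.1 -> p = q.
Proof.
  intros Hp Hq E.
  destruct (total_order_T p.2 q.2) as [[H|H]|H].
  - exfalso; eapply anti1; [exact Hp|exact Hq|lra|lra].
  - destruct p, q; simpl in *; subst; reflexivity.
  - exfalso; eapply anti1; [exact Hq|exact Hp|lra|lra].
Qed.

Lemma build (A : R * R -> Prop) (n : nat) :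
  ~ at_most n A -> forall m, (m <= S n)%coq_nat ->
  exists l, length l = m /\ NoDup l /\ forall p, In p l -> A p.
Proof.
  intros H m. induction m as [|m IH]; intros Hm.
  - exists nil; repeat split; [constructor|intros p []].
  - destruct (IH ltac:(lia)) as [l [L1 [L2 L3]]].
    destruct (classic (exists p, A p /\ ~ In p l)) as [[p [Ap Hp]]|Hn].
    + exists (p :: l); repeat split; simpl; [lia|constructor; auto|].
      intros q [<-|Hq]; auto.
    + exfalso; apply H; exists l; split; [lia|].
      intros p Ap. apply NNPP; intro Hp; apply Hn; eauto.
Qed.

Lemma getT i (l : list (R * R)) : (forall p, In p l -> exists s t, props i p s t) ->
  exists T, forall p, In p l -> exists s t, props i p s t /\ t <= T.
Proof.
  induction l as [|a l IH]; intros H.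
  - exists 0; intros p [].
  - destruct IH as [T0 HT0]; [intros; apply H; simpl; auto|].
    destruct (H a (or_introl (@Logic.eq_refl _ a))) as [s [t Hst]].
    exists (Rmax T0 t). intros p [<-|Hp].
    + exists s, t; split; auto; apply Rmax_r.
    + destruct (HT0 p Hp) as [s' [t' [A B]]]. exists s', t'; split; auto.
      apply Rle_trans with T0; auto; apply Rmax_l.
Qed.

Lemma cp_at_most i : (1 <= i)%Z -> at_most k (cp i).
Proof.
  intros Hi. apply NNPP; intro H.
  destruct (build _ _ H _ (le_n _)) as [l [L1 [L2 L3]]].
  destruct (getT i l) as [T HT].
  { intros p Hp; apply cp_props; auto. }
  set phi := fun p : R * R => f p.1 T.
  assert (N : NoDup (List.map phi l)).
  { apply NoDup_map_NoDup_ForallPairs; auto.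
    intros p q Hp Hq E. unfold phi in E.
    destruct (HT p Hp) as [s [t [Pp Tp]]]. destruct (HT q Hq) as [s' [t' [Pq Tq]]].
    destruct (total_order_T p.1 q.1) as [[C|C]|C].
    - assert (J := jump _ _ _ _ _ _ Pp Tp C). lia.
    - exact (props_eq _ _ _ _ _ _ _ Pp Pq C).
    - assert (J := jump _ _ _ _ _ _ Pq Tq C). lia. }
  assert (I : incl (List.map phi l) (List.map Z.of_nat (List.seq 0 k))).
  { intros z Hz. apply in_map_iff in Hz. destruct Hz as [p [<- Hp]].
    destruct (HT p Hp) as [s [t [Pp Tp]]].
    assert (J := jump _ _ _ _ _ _ Pp Tp (Rlt_plus_1 p.1)).
    assert (K1 := f_lek (p.1 + 1) T). assert (K0 := f_ge0 p.1 T).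
    apply in_map_iff. exists (Z.to_nat (phi p)). unfold phi. split; [lia|].
    apply in_seq. lia. }
  assert (Le := NoDup_incl_length N I).
  rewrite !length_map length_seq in Le. lia.
Qed.

End Abs.
Lemma lc_G (G : zmodType) (le : G -> G -> Prop) (k : nat) (F : R -> R -> Z * G) :
  is_lgroup le -> (forall s t, inM le k (F s t)) ->
  (forall s t, is_supM le k
     (fun y => exists s' t', s' < s /\ t' < t /\ y = F s' t') (F s t)) ->
  forall s t, (1 <= (F s t).1)%Z ->
  exists s' t', s' < s /\ t' < t /\ (F s' t').1 = (F s t).1.
Proof.
  intros [Lr La Lt Ltr Lj] HM Hsup s t Hi.
  destruct (Hsup s t) as [_ [Hub Hl]].
  apply NNPP; intro Hn.
  assert (Hlt : forall y, (exists s' t', s' < s /\ t' < t /\ y = F s' t') ->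
             (y.1 < (F s t).1)%Z).
  { intros y Hy. destruct (Hub _ Hy) as [H|[H _]]; auto.
    exfalso; apply Hn. destruct Hy as [s' [t' [h1 [h2 ->]]]]. exists s', t'; auto. }
  destruct (classic (exists e, le GRing.zero e /\ e <> GRing.zero)) as [[e [He0 Hne]]|Hno].
  - set x2 := (F s t).2.
    assert (Hsub : le (GRing.add x2 (GRing.opp e)) x2).
    { assert (H := Ltr _ _ (GRing.add x2 (GRing.opp e)) He0).
      rewrite GRing.add0r (GRing.addrC e) GRing.subrK in H. exact H. }
    set z := ((F s t).1, GRing.add x2 (GRing.opp e)).
    assert (Hz : lex_le le (F s t) z).
    { apply Hl.
      - split.
        + left; simpl; lia.
        + destruct (proj2 (HM s t)) as [H|[H1 H2]].
          * left; simpl; auto.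
          * right; split; simpl; auto. eapply Lt; [exact Hsub|exact H2].
      - intros y Hy; left; apply Hlt; exact Hy. }
    destruct Hz as [H|[_ H]]; [simpl in H; lia|].
    simpl in H. assert (E := La _ _ H Hsub).
    apply Hne.
    assert (E2 : GRing.add x2 GRing.zero = GRing.add x2 (GRing.opp e)).
    { rewrite GRing.addr0; exact E. }
    apply GRing.addrI in E2.
    rewrite -(GRing.opprK e) -E2 GRing.oppr0. reflexivity.
  - assert (Hz0 : forall e, le GRing.zero e -> e = GRing.zero).
    { intros e He; apply NNPP; intro H; apply Hno; exists e; auto. }
    assert (Triv : forall g h : G, g = h).
    { intros g h. destruct (Lj g h) as [j [Hj _]].
      assert (Eg : forall g, le g j -> g = j).
      { intros g' Hg'. assert (H := Ltr _ _ (GRing.opp g') Hg').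
        rewrite GRing.subrr in H. apply Hz0 in H. symmetry. apply GRing.subr0_eq. exact H. }
      rewrite (Eg g (Hj g (or_introl (@Logic.eq_refl _ g)))).
      rewrite (Eg h (Hj h (or_intror (@Logic.eq_refl _ h)))). reflexivity. }
    set z := (((F s t).1 - 1)%Z, (F s t).2).
    assert (Hz : lex_le le (F s t) z).
    { apply Hl.
      - split.
        + destruct (Z.eq_dec ((F s t).1 - 1) 0) as [E|E].
          * right; simpl; split; [lia|]. rewrite (Triv (F s t).2 GRing.zero); apply Lr.
          * left; simpl; lia.
        + left; simpl. destruct (proj2 (HM s t)) as [H|[H1 H2]]; simpl in *; lia.
      - intros y Hy. assert (H := Hlt y Hy).
        destruct (Z.eq_dec y.1 ((F s t).1 - 1)) as [E|E].
        + right; split; [exact E|]. simpl. rewrite (Triv y.2 (F s t).2); apply Lr.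
        + left; simpl; lia. }
    destruct Hz as [H|[H _]]; simpl in H; lia.
Qed.

Theorem theorem4p4 (k : nat) (G : zmodType) (le : G -> G -> Prop)
    (F : R -> R -> Z * G) :
  (1 <= k)%coq_nat ->
  is_lgroup le -> dedekind_sigma_complete le ->
  spectral_resolution2 le k F ->
  (forall i : Z, (1 <= i <= Z.of_nat k)%Z ->
     (exists s t, T_set F i s t) -> at_most k (char_point F i)) /\
  at_most (k * k) (char_point_F F).
Proof.
  intros Hk HG _ HSR.
  destruct HSR as [HM [Hmono [_ [Hsup [_ [_ Hrect]]]]]].
  set f := fun s t => (F s t).1.
  assert (f_ge0 : forall s t, (0 <= f s t)%Z).
  { intros s t. destruct (proj1 (HM s t)) as [H|[H _]]; unfold f; simpl in H; lia. }
  assert (f_lek : forall s t, (f s t <= Z.of_nat k)%Z).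
  { intros s t. destruct (proj2 (HM s t)) as [H|[H _]]; unfold f; simpl in H; lia. }
  assert (f_mono : forall s t s' t', s <= s' -> t <= t' -> (f s t <= f s' t')%Z).
  { intros s t s' t' H1 H2. destruct (Hmono s t s' t' H1 H2) as [H|[H _]]; unfold f; lia. }
  assert (f_rect : forall a1 b1 a2 b2, a1 <= b1 -> a2 <= b2 ->
    (0 <= f b1 b2 - f a1 b2 - f b1 a2 + f a1 a2)%Z).
  { intros a1 b1 a2 b2 H1 H2. destruct (proj1 (Hrect a1 b1 a2 b2 H1 H2)) as [H|[H _]];
    unfold f; simpl in H; lia. }
  assert (f_lc : forall s t, (1 <= f s t)%Z ->
    exists s' t', s' < s /\ t' < t /\ f s' t' = f s t).
  { exact (lc_G G le k F HG HM Hsup). }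
  assert (P1 : forall i, (1 <= i)%Z -> at_most k (char_point F i)).
  { intros i Hi. exact (cp_at_most f k f_ge0 f_lek f_mono f_rect f_lc i Hi). }
  split.
  { intros i [Hi _] _. apply P1; exact Hi. }
  assert (L : forall n : nat, exists l : list (R * R), (length l <= (n * k)%coq_nat)%coq_nat /\
     forall p, (exists i, (1 <= i <= Z.of_nat n)%Z /\ char_point F i p) -> In p l).
  { induction n as [|n IH].
    - exists nil; split; [simpl; lia|]. intros p [i [Hi _]]; lia.
    - destruct IH as [l [Hl Hin]].
      destruct (P1 (Z.of_nat (S n)) ltac:(lia)) as [l' [Hl' Hin']].
      exists (l ++ l'); split.
      + rewrite length_app. simpl. lia.
      + intros p [i [Hi Hc]]. apply in_or_app.
        destruct (Z.eq_dec i (Z.of_nat (S n))) as [E|E].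
        * right; apply Hin'; subst i; exact Hc.
        * left; apply Hin; exists i; split; [lia|exact Hc]. }
  destruct (L k) as [l [Hl Hin]]. exists l; split; [exact Hl|].
  intros p [i [Hi Hc]]. apply Hin. exists i; split; [|exact Hc].
  split; [exact Hi|].
  destruct Hc as [s [t [Hst _]]]. unfold T_set in Hst.
  assert (H := f_lek s t). unfold f in H. lia.
Qed.
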